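(* Let $\mathfrak{R}=(G,G',S,\phi,\rho,\delta)$ be an optimal reconciliation. Then $\Delta(\mathfrak{R})\subseteq V(G)$.
   Context: All trees are rooted binary trees whose root node has degree 1; every other non-leaf node $x$ has exactly two children $x_l,x_r$. $G$ is a gene tree, $S$ a species tree, $\phi:L(G)\to L(S)$. A tree $G'$ is an extension of $G$ if $G$ is obtained from $G'$ by pruning some subtrees and suppressing degree-2 nodes; $V(G)\subseteq V(G')$. A map $\rho:V(G')\to V(S)$ is consistent with $S$ if $\rho(root(G'))=root(S)$ and every node $x$ of $G'$ with two children satisfies (D) $\rho(x)=\rho(x_l)=\rho(x_r)$ or (S) $\rho(x)_l=\rho(x_l)$ and $\rho(x)_r=\rho(x_r)$. A reconciliation $\mathfrak{R}=(G,G',S,\phi,\rho,\delta)$ consists of an extension $G'$ of $G$, a consistent $\rho$ with $\rho|_{L(G)}=\phi$, and an injective partial function $\delta:\Delta\to\Lambda$ with $\rho(x)=\rho(\delta(x))$, where $\Delta=\Delta(\mathfrak{R})$ (duplications) is the set of nodes with two children satisfying (D) and $\Lambda=L(G')\setminus L(G)$ (losses); $\Delta'$ is the domain and $\Lambda'$ the image of $\delta$. Cost $\omega(\mathfrak{R})=|\Lambda\setminus\Lambda'|+|\Delta\setminus\Delta'|+|\Delta'|$; $\mathfrak{R}$ is optimal if it minimizes $\omega$ among all reconciliations for the given $G,S,\phi$. *)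

(* Defs.v *)
From mathcomp Require Import all_boot.
Set Implicit Arguments. Unset Strict Implicit. Unset Printing Implicit Defensive.

(* Ordered binary trees with labelled nodes (labels = node identities). *)
Inductive btree (A : Type) : Type :=
| Leaf of A
| Node of A & btree A & btree A.
Arguments Leaf {A}. Arguments Node {A}.

(* A rooted binary tree whose root has degree 1 ("planted"):
   the root [proot] has the single child [label pbody]. *)
Record ptree (A : Type) := Planted { proot : A; pbody : btree A }.
Arguments Planted {A}.

Section Trees.
Variable A : eqType.

Definition label (t : btree A) : A := match t with Leaf a => a | Node a _ _ => a end.

Fixpoint nodes (t : btree A) : seq A :=
  match t with Leaf a => [:: a] | Node a l r => a :: nodes l ++ nodes r end.

Fixpoint leaves (t : btree A) : seq A :=
  match t with Leaf a => [:: a] | Node _ l r => leaves l ++ leaves r end.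

Fixpoint inner (t : btree A) : seq A :=
  match t with Leaf _ => [::] | Node a l r => a :: inner l ++ inner r end.

Fixpoint kids (t : btree A) (x : A) : option (A * A) :=
  match t with
  | Leaf _ => None
  | Node a l r =>
      if a == x then Some (label l, label r)
      else match kids l x with Some p => Some p | None => kids r x end
  end.

Definition nodesP (T : ptree A) := proot T :: nodes (pbody T).
Definition leavesP (T : ptree A) := leaves (pbody T).
Definition innerP (T : ptree A) := inner (pbody T).
Definition kidsP (T : ptree A) (x : A) := kids (pbody T) x.

Definition wf_tree (T : ptree A) : bool := uniq (nodesP T).

(* Restriction to the leaves satisfying [keep]: prune all subtrees without
   kept leaves and suppress the resulting degree-2 nodes (a node left with a
   single child disappears, its child being attached to its parent). *)
Fixpoint restr (keep : pred A) (t : btree A) : option (btree A) :=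
  match t with
  | Leaf a => if keep a then Some (Leaf a) else None
  | Node a l r =>
      match restr keep l, restr keep r with
      | Some l', Some r' => Some (Node a l' r')
      | Some l', None => Some l'
      | None, Some r' => Some r'
      | None, None => None
      end
  end.

Definition restrP (keep : pred A) (T : ptree A) : option (ptree A) :=
  match restr keep (pbody T) with
  | Some t => Some (Planted (proot T) t)
  | None => None
  end.

(* G' is an extension of G: G is obtained from G' by pruning subtrees and
   suppressing degree-2 nodes (node identities preserved). *)
Definition extension (G' G : ptree A) : Prop :=
  wf_tree G' /\ exists keep : pred A, restrP keep G' = Some G.

End Trees.

Section Reconciliation.
Variable B : eqType.
(* gene-tree node identities are natural numbers (an unbounded supply of names) *)

Definition is_dup (G' : ptree nat) (rho : nat -> B) (x : nat) : bool :=
  match kidsP G' x with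
  | Some (xl, xr) => (rho x == rho xl) && (rho x == rho xr)
  | None => false
  end.

Definition is_spec (G' : ptree nat) (S : ptree B) (rho : nat -> B) (x : nat) : bool :=
  match kidsP G' x, kidsP S (rho x) with
  | Some (xl, xr), Some (sl, sr) => (sl == rho xl) && (sr == rho xr)
  | _, _ => false
  end.

Definition consistent (G' : ptree nat) (S : ptree B) (rho : nat -> B) : Prop :=
  rho (proot G') = proot S /\
  (forall x, x \in nodesP G' -> rho x \in nodesP S) /\
  (forall x, x \in innerP G' -> is_dup G' rho x || is_spec G' S rho x).

Definition Dup (G' : ptree nat) (rho : nat -> B) : seq nat := [seq x <- innerP G' | is_dup G' rho x].
Definition Loss (G G' : ptree nat) : seq nat := [seq y <- leavesP G' | y \notin leavesP G].
Definition Dup' (G' : ptree nat) (rho : nat -> B) (delta : nat -> option nat) : seq nat := [seq x <- Dup G' rho | delta x != None].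
Definition Loss' (G' : ptree nat) (rho : nat -> B) (delta : nat -> option nat) : seq nat := pmap delta (Dup' G' rho delta).

Definition is_reconciliation (G G' : ptree nat) (S : ptree B) (phi rho : nat -> B)
    (delta : nat -> option nat) : Prop :=
  extension G' G /\
  consistent G' S rho /\
  (forall x, x \in leavesP G -> rho x = phi x) /\
  (forall x y, x \in Dup G' rho -> delta x = Some y ->
      y \in Loss G G' /\ rho x = rho y) /\
  (forall x1 x2 y, x1 \in Dup G' rho -> x2 \in Dup G' rho ->
      delta x1 = Some y -> delta x2 = Some y -> x1 = x2).

Definition cost (G G' : ptree nat) (rho : nat -> B) (delta : nat -> option nat) : nat :=
  count (fun y => y \notin Loss' G' rho delta) (Loss G G')
  + count (fun x => delta x == None) (Dup G' rho)
  + size (Dup' G' rho delta).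

Definition optimal (G G' : ptree nat) (S : ptree B) (phi rho : nat -> B)
    (delta : nat -> option nat) : Prop :=
  is_reconciliation G G' S phi rho delta /\
  forall G'2 rho2 delta2, is_reconciliation G G'2 S phi rho2 delta2 ->
    cost G G' rho delta <= cost G G'2 rho2 delta2.

End Reconciliation.

(* Main.v *)
Require Import Defs.
From mathcomp Require Import all_boot zify.
Set Implicit Arguments. Unset Strict Implicit. Unset Printing Implicit Defensive.

Inductive ctx := Hole | CL of nat & ctx & btree nat | CR of nat & btree nat & ctx.

Fixpoint plug (C : ctx) (u : btree nat) : btree nat :=
  match C with Hole => u | CL a C' t => Node a (plug C' u) t | CR a t C' => Node a t (plug C' u) end.
Fixpoint cnodes C : seq nat := match C with Hole => [::]
  | CL a C' t => a :: cnodes C' ++ nodes t | CR a t C' => a :: nodes t ++ cnodes C' end.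
Fixpoint cinner C : seq nat := match C with Hole => [::]
  | CL a C' t => a :: cinner C' ++ inner t | CR a t C' => a :: inner t ++ cinner C' end.
Fixpoint cleaves C : seq nat := match C with Hole => [::]
  | CL a C' t => cleaves C' ++ leaves t | CR a t C' => leaves t ++ cleaves C' end.

Lemma nodes_plug C u : perm_eq (nodes (plug C u)) (cnodes C ++ nodes u).
Proof.
elim: C => [|a C IH t|a t C IH] /=; first by [].
- apply/permP => p; move/permP: IH => IH; rewrite /= !count_cat IH count_cat; congr (_ + _); by rewrite addnAC.
- apply/permP => p; move/permP: IH => IH; rewrite /= !count_cat IH count_cat; congr (_ + _); by rewrite addnA.
Qed.
Lemma inner_plug C u : perm_eq (inner (plug C u)) (cinner C ++ inner u).
Proof.
elim: C => [|a C IH t|a t C IH] /=; first by [].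
- apply/permP => p; move/permP: IH => IH; rewrite /= !count_cat IH count_cat; congr (_ + _); by rewrite addnAC.
- apply/permP => p; move/permP: IH => IH; rewrite /= !count_cat IH count_cat; congr (_ + _); by rewrite addnA.
Qed.
Lemma leaves_plug C u : perm_eq (leaves (plug C u)) (cleaves C ++ leaves u).
Proof.
elim: C => [|a C IH t|a t C IH] /=; first by [].
- apply/permP => p; move/permP: IH => IH; rewrite /= !count_cat IH count_cat; by rewrite addnAC.
- apply/permP => p; move/permP: IH => IH; rewrite /= !count_cat IH count_cat; by rewrite addnA.
Qed.

Lemma plug_inner x (t : btree nat) : x \in inner t -> exists C l r, t = plug C (Node x l r).
Proof.
elim: t => [a|a l IHl r IHr] //=.
rewrite in_cons mem_cat; case/orP => [/eqP->|/orP[H|H]].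
- by exists Hole, l, r.
- by case: (IHl H) => C [l' [r' ->]]; exists (CL a C r), l', r'.
- by case: (IHr H) => C [l' [r' ->]]; exists (CR a l C), l', r'.
Qed.
Lemma plug_leaf x (t : btree nat) : x \in leaves t -> exists C, t = plug C (Leaf x).
Proof.
elim: t => [a|a l IHl r IHr] //=.
- by rewrite inE => /eqP->; exists Hole.
rewrite mem_cat; case/orP => H.
- by case: (IHl H) => C ->; exists (CL a C r).
- by case: (IHr H) => C ->; exists (CR a l C).
Qed.

Lemma leaves_sub (t : btree nat) : subseq (leaves t) (nodes t).
Proof.
elim: t => [a|a l IHl r IHr] //=; first by rewrite eqxx.
apply: subseq_trans (subseq_cons _ a); exact: cat_subseq.
Qed.
Lemma inner_sub (t : btree nat) : subseq (inner t) (nodes t).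
Proof.
elim: t => [a|a l IHl r IHr] //=.
by rewrite eqxx; exact: cat_subseq.
Qed.

Lemma kids_notin (t : btree nat) z : z \notin nodes t -> kids t z = None.
Proof.
elim: t => [a|a l IHl r IHr] //=.
rewrite in_cons mem_cat negb_or => /andP[az /norP[zl zr]].
by rewrite eq_sym (negbTE az) IHl // IHr.
Qed.

Lemma kids_plug_in C u z : z \notin cnodes C -> kids (plug C u) z = kids u z.
Proof.
elim: C => [|a C IH t|a t C IH] //=;
rewrite in_cons mem_cat negb_or => /andP[az /norP[H1 H2]];
rewrite eq_sym (negbTE az).
- by rewrite IH //; case: (kids u z) => // ; rewrite kids_notin.
- rewrite IH //; case: (kids u z) => // ; by rewrite kids_notin.
Qed.

Lemma uniq_catr (s1 s2 : seq nat) z : uniq (s1 ++ s2) -> z \in s2 -> z \notin s1.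
Proof.
rewrite cat_uniq => /and3P[_ H _] zs2; apply/negP => zs1.
by move/negP: H; apply; apply/hasP; exists z.
Qed.

Section R.
Variable B : eqType.
Variable rho : nat -> B.
Definition kidsR t z := omap (fun p : nat * nat => (rho p.1, rho p.2)) (kids t z).

Lemma omap_match (f : nat * nat -> B * B) (k k2 : option (nat * nat)) :
  omap f (match k with Some p => Some p | None => k2 end) =
  match omap f k with Some q => Some q | None => omap f k2 end.
Proof. by case: k. Qed.

Lemma label_plug C u u' : rho (label u) = rho (label u') -> rho (label (plug C u)) = rho (label (plug C u')).
Proof. by case: C. Qed.

Lemma kids_plug_out C u u' z : z \notin nodes u -> z \notin nodes u' ->
  rho (label u) = rho (label u') -> kidsR (plug C u) z = kidsR (plug C u') z.
Proof.
move=> zu zu' Hl; elim: C => [|a C IH t|a t C IH] /=.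
- by rewrite /kidsR !kids_notin.
- rewrite /kidsR /=; case: (a == z) => /=; first by rewrite (label_plug C Hl).
  by rewrite !omap_match -/(kidsR _ _) IH.
- rewrite /kidsR /=; case: (a == z) => /=; first by rewrite (label_plug C Hl).
  by rewrite !omap_match -!/(kidsR _ _) IH.
Qed.
End R.

Lemma restr_plug keep C u u' : restr keep u = restr keep u' -> restr keep (plug C u) = restr keep (plug C u').
Proof. by move=> H; elim: C => [|a C IH t|a t C IH] //=; rewrite IH. Qed.

Lemma restr_leaves keep (t : btree nat) : match restr keep t with Some g => leaves g = filter keep (leaves t)
  | None => filter keep (leaves t) = [::] end.
Proof.
elim: t => [a|a l IHl r IHr] /=; first by case: (keep a).
move: IHl IHr; case: (restr keep l) => [l'|]; case: (restr keep r) => [r'|] /=;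
  rewrite filter_cat => -> -> //; by rewrite ?cats0.
Qed.

Lemma restr_plug_sub keep C u u' : restr keep u = Some u' ->
  exists g, restr keep (plug C u) = Some g /\ {subset nodes u' <= nodes g}.
Proof.
move=> H; elim: C => [|a C [g [IH1 IH2]] t|a t C [g [IH1 IH2]]] /=.
- by exists u'; split.
- rewrite IH1; case: (restr keep t) => [r'|]; last by exists g.
  by exists (Node a g r'); split => // z /IH2 zg /=; rewrite in_cons mem_cat zg orbT.
- rewrite IH1; case: (restr keep t) => [r'|]; last by exists g.
  by exists (Node a r' g); split => // z /IH2 zg /=; rewrite in_cons mem_cat zg !orbT.
Qed.

Lemma pmap_map (delta : nat -> option nat) (s : seq nat) :
  all (fun z => delta z != None) s -> pmap delta s = map (fun z => odflt 0 (delta z)) s.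
Proof.
elim: s => [|a s IH] //= /andP[Ha Hs]; rewrite IH //.
by case: (delta a) Ha.
Qed.

Lemma wf_uniq (G' : ptree nat) : wf_tree G' -> uniq (nodes (pbody G')).
Proof. by rewrite /wf_tree /nodesP cons_uniq => /andP[]. Qed.

Lemma cost_formula (B : eqType) G G' S phi (rho : nat -> B) delta :
  is_reconciliation G G' S phi rho delta ->
  cost G G' rho delta + size (Dup' G' rho delta) = size (Loss G G') + size (Dup G' rho).
Proof.
case=> [[wf _] [_ [_ [Hd Hinj]]]].
have uN := wf_uniq wf.
have uL : uniq (leavesP G') := subseq_uniq (leaves_sub _) uN.
have uI : uniq (innerP G') := subseq_uniq (inner_sub _) uN.
have uLoss : uniq (Loss G G') := filter_uniq _ uL.
have uDup : uniq (Dup G' rho) := filter_uniq _ uI.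
have uDup' : uniq (Dup' G' rho delta) := filter_uniq _ uDup.
have allS : all (fun z => delta z != None) (Dup' G' rho delta) by apply: filter_all.
have Hpm : Loss' G' rho delta = map (fun z => odflt 0 (delta z)) (Dup' G' rho delta)
  by rewrite /Loss' pmap_map.
have sL' : size (Loss' G' rho delta) = size (Dup' G' rho delta) by rewrite Hpm size_map.
have uL' : uniq (Loss' G' rho delta).
  rewrite Hpm map_inj_in_uniq // => z1 z2.
  rewrite /Dup' !mem_filter => /andP[n1 d1] /andP[n2 d2].
  case E1: (delta z1) n1 => [y1|] // _.
  case E2: (delta z2) n2 => [y2|] // _ /= E; subst y2; apply: (Hinj z1 z2 y1 _ _ E1 E2); by rewrite /Dup mem_filter.
have subL' : {subset Loss' G' rho delta <= Loss G G'}.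
  move=> y; rewrite Hpm => /mapP[z]; rewrite /Dup' mem_filter => /andP[n d] ->.
  by case E: (delta z) n => [y1|] //= _; case: (Hd z y1 d E).
have cnt : count (mem (Loss' G' rho delta)) (Loss G G') = size (Loss' G' rho delta).
  transitivity (size [seq y <- Loss G G' | y \in Loss' G' rho delta]); first by rewrite size_filter.
  apply/perm_size/uniq_perm => //; first exact: filter_uniq.
  by move=> y; rewrite mem_filter; case H: (y \in Loss' _ _ _) => //=; rewrite subL'.
rewrite /cost.
have -> : count (fun y => y \notin Loss' G' rho delta) (Loss G G') =
          count (predC (mem (Loss' G' rho delta))) (Loss G G') by apply: eq_count.
have H1 := count_predC (mem (Loss' G' rho delta)) (Loss G G').
have H2 := count_predC (fun x => delta x == None) (Dup G' rho).
have E3 : size (Dup' G' rho delta) = count (predC (fun x => delta x == None)) (Dup G' rho).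
  by rewrite /Dup' size_filter.
rewrite cnt sL' in H1.
rewrite E3 in H1 *.
move: H1 H2; move: (count (predC (fun x => delta x == None)) (Dup G' rho)) => c.
move: (count (predC (mem (Loss' G' rho delta))) (Loss G G')) => d.
move: (count (fun x => delta x == None) (Dup G' rho)) => e.
move=> <- <-; lia.
Qed.

Section K.
Variable B : eqType.
Variable rho : nat -> B.

Lemma is_dup_kidsR (T : ptree nat) z : is_dup T rho z =
  if kidsR rho (pbody T) z is Some (a, b) then (rho z == a) && (rho z == b) else false.
Proof. by rewrite /is_dup /kidsR /kidsP /=; case: (kids (pbody T) z) => [[a b]|]. Qed.

Lemma is_spec_kidsR (T : ptree nat) S z : is_spec T S rho z =
  if kidsR rho (pbody T) z is Some (a, b) then
    (if kidsP S (rho z) is Some (sl, sr) then (sl == a) && (sr == b) else false) else false.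
Proof. by rewrite /is_spec /kidsR /kidsP /=; case: (kids (pbody T) z) => [[a b]|]. Qed.
End K.

Lemma perm_h1 (a b c u k o : seq nat) x : perm_eq a (c ++ u) -> perm_eq u (x :: k ++ o) ->
  perm_eq b (c ++ k) -> perm_eq a (x :: b ++ o).
Proof.
move=> /permP H1 /permP H2 /permP H3; apply/permP => p.
rewrite H1 count_cat H2 /= !count_cat H3 !count_cat.
move: (count p c) (count p k) (count p o) (nat_of_bool (p x)) => ? ? ? ?; lia.
Qed.
Lemma perm_h2 (a b c u k o : seq nat) : perm_eq a (c ++ u) -> perm_eq u (k ++ o) ->
  perm_eq b (c ++ k) -> perm_eq a (b ++ o).
Proof.
move=> /permP H1 /permP H2 /permP H3; apply/permP => p.
rewrite H1 !count_cat H2 !count_cat H3 !count_cat.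
move: (count p c) (count p k) (count p o) => ? ? ?; lia.
Qed.

Section Build.
Variable B : eqType.
Variables (G G' : ptree nat) (S : ptree B) (phi rho : nat -> B) (delta delta2 : nat -> option nat).
Variable keep : pred nat.
Variable t2 : btree nat.
Hypothesis Hkids : forall z, z \in inner t2 -> kidsR rho t2 z = kidsR rho (pbody G') z.
Hypothesis Hsubi : {subset inner t2 <= inner (pbody G')}.

Lemma dup_eq z : z \in inner t2 -> is_dup (Planted (proot G') t2) rho z = is_dup G' rho z.
Proof. by move=> zi; rewrite !is_dup_kidsR /= Hkids. Qed.

Lemma spec_eq z : z \in inner t2 -> is_spec (Planted (proot G') t2) S rho z = is_spec G' S rho z.
Proof. by move=> zi; rewrite !is_spec_kidsR /= Hkids. Qed.

Lemma dup_sub z : z \in Dup (Planted (proot G') t2) rho -> z \in Dup G' rho.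
Proof.
rewrite /Dup !mem_filter => /andP[d i]; rewrite -dup_eq // d /=.
exact: Hsubi.
Qed.

Lemma build :
  is_reconciliation G G' S phi rho delta -> restrP keep G' = Some G ->
  uniq (proot G' :: nodes t2) ->
  restr keep t2 = restr keep (pbody G') ->
  {subset nodes t2 <= nodes (pbody G')} ->
  (forall z y, z \in Dup (Planted (proot G') t2) rho -> delta2 z = Some y ->
      delta z = Some y /\ y \in Loss G (Planted (proot G') t2)) ->
  is_reconciliation G (Planted (proot G') t2) S phi rho delta2.
Proof.
case=> [[wf _] [[Hroot [Hnod Hinn]] [Hleaf [Hd Hinj]]]] Hres u2 Hr Hsubn Hd2.
split; [split => //; exists keep|split; [split|split => //; split]].
- by rewrite /restrP /= Hr -Hres /restrP.
- exact: Hroot.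
- split.
  + move=> z; rewrite /nodesP /= in_cons => /orP[/eqP->|zn].
    * by apply: Hnod; rewrite /nodesP mem_head.
    * by apply: Hnod; rewrite /nodesP in_cons (Hsubn _ zn) orbT.
  + move=> z zi; rewrite dup_eq // spec_eq //; exact: Hinn (Hsubi zi).
- move=> z y zD E; case: (Hd2 z y zD E) => E1 yL; split => //.
  by case: (Hd z y (dup_sub zD) E1).
- move=> z1 z2 y D1 D2 E1 E2.
  case: (Hd2 z1 y D1 E1) => F1 _; case: (Hd2 z2 y D2 E2) => F2 _.
  exact: (Hinj z1 z2 y (dup_sub D1) (dup_sub D2) F1 F2).
Qed.
End Build.

Lemma uniq_perm_cons (r : nat) s1 s2 : perm_eq s1 s2 -> uniq (r :: s1) -> uniq (r :: s2).
Proof. by move=> P; rewrite !cons_uniq (perm_mem P) (perm_uniq P). Qed.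

Lemma perm_h3 (a b c d o : seq nat) x y : perm_eq a (x :: b ++ o) -> perm_eq b (c ++ [:: y]) ->
  perm_eq d (c ++ o) -> perm_eq a (x :: y :: d).
Proof.
move=> /permP H1 /permP H2 /permP H3; apply/permP => p.
rewrite H1 /= !count_cat H2 H3 !count_cat /=.
move: (count p c) (count p o) (nat_of_bool (p x)) (nat_of_bool (p y)) => ? ? ? ?; lia.
Qed.
Lemma perm_h4 (a b c d o : seq nat) x : perm_eq a (x :: b ++ o) -> perm_eq b (c ++ [::]) ->
  perm_eq d (c ++ o) -> perm_eq a (x :: d).
Proof.
move=> /permP H1 /permP H2 /permP H3; apply/permP => p.
rewrite H1 /= !count_cat H2 H3 !count_cat /=.
move: (count p c) (count p o) (nat_of_bool (p x)) => ? ? ?; lia.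
Qed.
Lemma perm_h5 (a b c d o : seq nat) y : perm_eq a (b ++ o) -> perm_eq b (c ++ [:: y]) ->
  perm_eq d (c ++ o) -> perm_eq a (y :: d).
Proof.
move=> /permP H1 /permP H2 /permP H3; apply/permP => p.
rewrite H1 /= !count_cat H2 H3 !count_cat /=.
move: (count p c) (count p o) (nat_of_bool (p y)) => ? ? ?; lia.
Qed.

Lemma uh1 (r x : nat) a b : uniq (r :: x :: a ++ b) ->
  [/\ uniq (r :: a), x \notin a, x \notin b & uniq (a ++ b)].
Proof.
rewrite cons_uniq => /andP[rn]; rewrite cons_uniq => /andP[xn u].
have ra : r \notin a by apply/negP => H; move: rn; rewrite in_cons mem_cat H !orbT.
have xa : x \notin a by apply/negP => H; move: xn; rewrite mem_cat H.
have xb : x \notin b by apply/negP => H; move: xn; rewrite mem_cat H orbT.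
split => //. rewrite cons_uniq ra /=. by move: u; rewrite cat_uniq => /and3P[].
Qed.

Lemma arithA (c1 c2 d1 d2 L1 L2 D1 D2 lo co A Bo X Z N N2 : nat) :
  c1 + d1 = L1 + D1 -> c2 + d2 = L2 + D2 -> c1 <= c2 -> L1 = L2 + lo -> D1 = D2.+1 + co ->
  X + Z <= lo -> d1 = X + A + Bo -> d2 = N2 -> A = N -> N = N2 + Z -> Bo <= co -> False.
Proof. lia. Qed.

Lemma arithB (c1 c2 d1 d2 L1 L2 D1 D2 : nat) :
  c1 + d1 = L1 + D1 -> c2 + d2 = L2 + D2 -> c1 <= c2 -> L1 = L2.+1 -> D1 = D2.+1 ->
  d1 = d2.+1 -> False.
Proof. lia. Qed.

Lemma count_split (a b c : pred nat) (s : seq nat) :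
  (forall z, nat_of_bool (a z) = b z + c z) -> count a s = count b s + count c s.
Proof. move=> H; elim: s => [|z s IH] //=; by rewrite IH H addnACA. Qed.

Lemma core (B : eqType) G G' S phi (rho : nat -> B) delta keep C u x k o :
  is_reconciliation G G' S phi rho delta ->
  (forall G'2 rho2 delta2, is_reconciliation G G'2 S phi rho2 delta2 ->
     cost G G' rho delta <= cost G G'2 rho2 delta2) ->
  restrP keep G' = Some G ->
  pbody G' = plug C u ->
  x \in Dup G' rho ->
  perm_eq (nodes u) (x :: nodes k ++ nodes o) ->
  perm_eq (inner u) (x :: inner k ++ inner o) ->
  perm_eq (leaves u) (leaves k ++ leaves o) ->
  restr keep u = restr keep k -> restr keep o = None ->
  rho (label u) = rho x -> rho (label k) = rho x -> rho (label o) = rho x ->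
  (forall z, z \in nodes k -> kids u z = kids k z) ->
  (forall z, z \in nodes o -> kids u z = kids o z) -> False.
Proof.
move=> rec opt Hres Ht xD Pn Pi Pl Rk Ro Lu Lk Lo Kk Ko.
have rec0 := rec.
case: rec0 => [[wf _] [_ [_ [Hd Hinj]]]].
have uR : uniq (proot G' :: nodes (pbody G')) := wf.
have uN := wf_uniq wf.
have HrG : restr keep (pbody G') = Some (pbody G).
  by move: Hres; rewrite /restrP; case: (restr keep (pbody G')) => // g [<-].
have HLG : leavesP G = filter keep (leavesP G').
  by have := restr_leaves keep (pbody G'); rewrite HrG.
have oLoss : forall y, y \in leaves o -> y \notin leavesP G.
  move=> y yo; rewrite HLG mem_filter; have := restr_leaves keep o; rewrite Ro => H.
  apply/negP => /andP[ky _].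
  have : y \in filter keep (leaves o) by rewrite mem_filter ky yo.
  by rewrite H.
have notkept : forall y, y \in leavesP G' -> y \notin leavesP G -> keep y = false.
  by move=> y yt; rewrite HLG mem_filter yt andbT => /negbTE.
have xdup : is_dup G' rho x by move: xD; rewrite /Dup mem_filter => /andP[].
have xin : x \in innerP G' by move: xD; rewrite /Dup mem_filter => /andP[].
have [t1 Et1] : exists t1, t1 = plug C k by eexists.
have PN1 : perm_eq (nodes (pbody G')) (x :: nodes t1 ++ nodes o).
  by rewrite Ht; apply: perm_h1 (nodes_plug C u) Pn _; rewrite Et1 nodes_plug.
have PI1 : perm_eq (inner (pbody G')) (x :: inner t1 ++ inner o).
  by rewrite Ht; apply: perm_h1 (inner_plug C u) Pi _; rewrite Et1 inner_plug.
have PL1 : perm_eq (leaves (pbody G')) (leaves t1 ++ leaves o).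
  by rewrite Ht; apply: perm_h2 (leaves_plug C u) Pl _; rewrite Et1 leaves_plug.
have [u1 xt1 xo ut1o] := uh1 (uniq_perm_cons PN1 uR).
have uu : uniq (cnodes C ++ nodes u) by rewrite -(perm_uniq (nodes_plug C u)) -Ht.
have ut1 : uniq (nodes t1) by move: u1; rewrite cons_uniq => /andP[].
have uCk : uniq (cnodes C ++ nodes k) by rewrite -(perm_uniq (nodes_plug C k)) -Et1.
have kA : forall z, z \in nodes t1 -> kidsR rho t1 z = kidsR rho (pbody G') z.
  move=> z zt1; case zk: (z \in nodes k).
  - have zu : z \in nodes u by rewrite (perm_mem Pn) in_cons mem_cat zk orbT.
    rewrite /kidsR Ht Et1 kids_plug_in ?(uniq_catr uCk zk) // kids_plug_in ?(uniq_catr uu zu) //.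
    by rewrite Kk.
  - have zC : z \in cnodes C by move: zt1; rewrite Et1 (perm_mem (nodes_plug C k)) mem_cat zk orbF.
    have zu : z \notin nodes u.
      by apply/negP => zu; have := uniq_catr uu zu; rewrite zC.
    rewrite Ht Et1; symmetry; apply: kids_plug_out => //; first by rewrite zk.
    by rewrite Lu Lk.
have Hrt1 : restr keep t1 = restr keep (pbody G') by rewrite Ht Et1; apply: restr_plug; rewrite Rk.
have caseA : (forall y', delta x = Some y' -> y' \in leaves o) -> False.
  move=> Hx.
  pose G2 := Planted (proot G') t1.
  pose delta2 := fun z => if delta z is Some y then (if y \in Loss G G2 then Some y else None) else None.
  have Hsubn : {subset nodes t1 <= nodes (pbody G')}
    by move=> z zt; rewrite (perm_mem PN1) in_cons mem_cat zt orbT.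
  have Hsubi : {subset inner t1 <= inner (pbody G')}
    by move=> z zt; rewrite (perm_mem PI1) in_cons mem_cat zt orbT.
  have Hk : forall z, z \in inner t1 -> kidsR rho t1 z = kidsR rho (pbody G') z.
    by move=> z zi; apply: kA; apply: (mem_subseq (inner_sub t1)).
  have Hd2 : forall z y, z \in Dup G2 rho -> delta2 z = Some y -> delta z = Some y /\ y \in Loss G G2.
    move=> z y _; rewrite /delta2; case: (delta z) => [y1|] //; case: ifP => // yL [<-]; by split.
  have rec2 : is_reconciliation G G2 S phi rho delta2.
    exact: (@build B G G' S phi rho delta delta2 keep t1 Hk Hsubi rec Hres u1 Hrt1 Hsubn Hd2).
  have cf1 := cost_formula rec. have cf2 := cost_formula rec2. have le := opt _ _ _ rec2.
  have deq : {in inner t1, is_dup G2 rho =1 is_dup G' rho} by move=> z zi; exact: (dup_eq Hk zi).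
  have sL : size (Loss G G') = size (Loss G G2) + size (leaves o).
    rewrite /Loss !size_filter /leavesP /= (permP PL1) count_cat; congr (_ + _).
    rewrite -[RHS]count_predT; apply: eq_in_count => y yo /=; by rewrite oLoss.
  have sD : size (Dup G' rho) = (size (Dup G2 rho)).+1 + count (is_dup G' rho) (inner o).
    rewrite /Dup !size_filter /innerP /= (permP PI1) /= count_cat xdup (eq_in_count deq).
    by rewrite add1n addSn.
  pose Zp := fun z => (delta z != None) && (delta2 z == None).
  have uD2 : uniq (Dup G2 rho) by apply: filter_uniq; apply: subseq_uniq (inner_sub t1) ut1.
  have Zb : (delta x != None) + count Zp (Dup G2 rho) <= size (leaves o).
    pose s := (if delta x is Some y then [:: y] else [::]) ++ map (fun z => odflt 0 (delta z)) (filter Zp (Dup G2 rho)).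
    have ss : size s = (delta x != None) + count Zp (Dup G2 rho).
      by rewrite /s size_cat size_map size_filter; case: (delta x).
    rewrite -ss; apply: uniq_leq_size.
    - rewrite /s cat_uniq; apply/and3P; split.
      + by case: (delta x).
      + apply/hasP => -[y /mapP[z zf ->]] yh.
        move: zf; rewrite mem_filter => /andP[/andP[n _] zD].
        case E: (delta x) yh => [y1|] //; rewrite inE => /eqP E'.
        case E2: (delta z) n E' => [y2|] // _ /= E'; subst y2.
        have zx := Hinj z x y1 (dup_sub Hk Hsubi zD) xD E2 E; subst z.
        move: zD; rewrite /Dup mem_filter => /andP[_ xi].
        by move: xt1; rewrite (mem_subseq (inner_sub t1) xi).
      + rewrite map_inj_in_uniq; first exact: filter_uniq.
        move=> z1 z2; rewrite mem_filter => /andP[/andP[n1 _] d1]; rewrite mem_filter => /andP[/andP[n2 _] d2].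
        case E1: (delta z1) n1 => [y1|]// _; case E2: (delta z2) n2 => [y2|] // _ /= E; subst y2.
        exact: (Hinj z1 z2 y1 (dup_sub Hk Hsubi d1) (dup_sub Hk Hsubi d2) E1 E2).
    - move=> y; rewrite mem_cat => /orP[yh|/mapP[z zf ->]].
      + by case E: (delta x) yh => [y1|] //; rewrite inE => /eqP->; exact: Hx.
      + move: zf; rewrite mem_filter => /andP[/andP[n d2n] zD].
        case E: (delta z) n => [y1|] // _ /=.
        move: d2n; rewrite /delta2 E; case: ifP => // yL2 _.
        have [yL _] := Hd z y1 (dup_sub Hk Hsubi zD) E.
        move: yL; rewrite /Loss mem_filter => /andP[ynG yt].
        move: yt; rewrite /leavesP (perm_mem PL1) mem_cat => /orP[yt1|] //.
        by move: yL2; rewrite /Loss mem_filter ynG /leavesP /= yt1.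
  have eD'1 : size (Dup' G' rho delta) = (delta x != None) +
      count (predI (fun z => delta z != None) (is_dup G' rho)) (inner t1) +
      count (predI (fun z => delta z != None) (is_dup G' rho)) (inner o).
    by rewrite /Dup' size_filter /Dup count_filter /innerP (permP PI1) /= count_cat xdup andbT addnA.
  have eD'2 : size (Dup' G2 rho delta2) = count (fun z => delta2 z != None) (Dup G2 rho)
    by rewrite /Dup' size_filter.
  have e1 : count (predI (fun z => delta z != None) (is_dup G' rho)) (inner t1) =
      count (fun z => delta z != None) (Dup G2 rho).
    by rewrite /Dup count_filter; apply: eq_in_count => z zi /=; rewrite deq.
  have e2 : count (fun z => delta z != None) (Dup G2 rho) =
      count (fun z => delta2 z != None) (Dup G2 rho) + count Zp (Dup G2 rho).
    apply: count_split => z; rewrite /Zp /delta2; case: (delta z) => [y|] //=.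
    by case: ifP.
  have e3 : count (predI (fun z => delta z != None) (is_dup G' rho)) (inner o) <=
      count (is_dup G' rho) (inner o) by apply: sub_count => z /andP[].
  exact: (arithA cf1 cf2 le sL sD Zb eD'1 eD'2 e1 e2 e3).

case Ex: (delta x) => [y'|]; last by apply: caseA => y'; rewrite Ex.
case yo: (y' \in leaves o); first by apply: caseA => y1; rewrite Ex => -[<-].
have [yL rxy] := Hd x y' xD Ex.
move: (yL); rewrite /Loss mem_filter => /andP[ynG yt].
have yt1 : y' \in leaves t1 by move: yt; rewrite /leavesP (perm_mem PL1) mem_cat yo orbF.
have [C2 E2] := plug_leaf yt1.
have [t2 Et2] : exists t2, t2 = plug C2 o by eexists.
have PN2 : perm_eq (nodes (pbody G')) (x :: y' :: nodes t2).
  apply: perm_h3 PN1 _ _; first by rewrite E2; apply: nodes_plug.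
  by rewrite Et2; apply: nodes_plug.
have PI2 : perm_eq (inner (pbody G')) (x :: inner t2).
  apply: perm_h4 PI1 _ _; first by rewrite E2; apply: inner_plug.
  by rewrite Et2; apply: inner_plug.
have PL2 : perm_eq (leaves (pbody G')) (y' :: leaves t2).
  apply: perm_h5 PL1 _ _; first by rewrite E2; apply: leaves_plug.
  by rewrite Et2; apply: leaves_plug.
have u2all : uniq (proot G' :: x :: y' :: nodes t2) := uniq_perm_cons PN2 uR.
have u2all' : uniq (proot G' :: x :: (y' :: nodes t2) ++ [::]) by rewrite cats0.
have [H1 xn0 _ _] := uh1 u2all'.
have xn : x \notin nodes t2 by move: xn0; rewrite in_cons negb_or => /andP[].
move: H1; rewrite /= in_cons negb_or => /andP[/andP[_ rt2] /andP[yt2 ut2']].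
have u2 : uniq (proot G' :: nodes t2) by rewrite /= rt2 ut2'.
have ut2 : uniq (cnodes C2 ++ nodes o) by rewrite -(perm_uniq (nodes_plug C2 o)) -Et2.
have uC2 : uniq (cnodes C2 ++ [:: y']).
  by have := perm_uniq (nodes_plug C2 (Leaf y')); rewrite -E2 ut1 /= => <-.
have Hk2 : forall z, z \in inner t2 -> kidsR rho t2 z = kidsR rho (pbody G') z.
  move=> z zi; have zt2 : z \in nodes t2 := mem_subseq (inner_sub t2) zi.
  case zo: (z \in nodes o).
  - have zu : z \in nodes u by rewrite (perm_mem Pn) in_cons mem_cat zo !orbT.
    rewrite /kidsR Et2 Ht kids_plug_in ?(uniq_catr ut2 zo) // kids_plug_in ?(uniq_catr uu zu) //.
    by rewrite Ko.
  - have zC : z \in cnodes C2 by move: zt2; rewrite Et2 (perm_mem (nodes_plug C2 o)) mem_cat zo orbF.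
    have zy : z \notin nodes (Leaf y').
      by apply/negP => zy; have := uniq_catr uC2 zy; rewrite zC.
    rewrite -kA; last by rewrite E2 (perm_mem (nodes_plug C2 (Leaf y'))) mem_cat zC.
    rewrite Et2 E2; apply: kids_plug_out => //; first by rewrite zo.
    by rewrite Lo rxy.
have Hsubn2 : {subset nodes t2 <= nodes (pbody G')}
  by move=> z zt; rewrite (perm_mem PN2) !in_cons zt !orbT.
have Hsubi2 : {subset inner t2 <= inner (pbody G')}
  by move=> z zt; rewrite (perm_mem PI2) in_cons zt orbT.
have ky : keep y' = false := notkept y' yt ynG.
have Hrt2 : restr keep t2 = restr keep (pbody G').
  by rewrite -Hrt1 Et2 E2; apply: restr_plug; rewrite Ro /= ky.
pose G2 := Planted (proot G') t2.
have Hd2 : forall z y, z \in Dup G2 rho -> delta z = Some y -> delta z = Some y /\ y \in Loss G G2.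
  move=> z y zD E; split => //.
  have [yL2 _] := Hd z y (dup_sub Hk2 Hsubi2 zD) E.
  move: yL2; rewrite /Loss mem_filter => /andP[ynG2 yt2'].
  rewrite mem_filter ynG2 /=.
  move: yt2'; rewrite /leavesP (perm_mem PL2) in_cons => /orP[/eqP yy|] //.
  subst y. have zx := Hinj z x y' (dup_sub Hk2 Hsubi2 zD) xD E Ex; subst z.
  move: zD; rewrite /Dup mem_filter => /andP[_ xi].
  by move: xn; rewrite (mem_subseq (inner_sub t2) xi).
have rec2 : is_reconciliation G G2 S phi rho delta :=
  @build B G G' S phi rho delta delta keep t2 Hk2 Hsubi2 rec Hres u2 Hrt2 Hsubn2 Hd2.
have cf1 := cost_formula rec. have cf2 := cost_formula rec2. have le := opt _ _ _ rec2.
have deq2 : {in inner t2, is_dup G2 rho =1 is_dup G' rho} by move=> z zi; exact: (dup_eq Hk2 zi).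
have sL : size (Loss G G') = (size (Loss G G2)).+1.
  by rewrite /Loss !size_filter /leavesP /= (permP PL2) /= ynG add1n.
have sD : size (Dup G' rho) = (size (Dup G2 rho)).+1.
  by rewrite /Dup !size_filter /innerP /= (permP PI2) /= xdup (eq_in_count deq2) add1n.
have sD' : size (Dup' G' rho delta) = (size (Dup' G2 rho delta)).+1.
  rewrite /Dup' !size_filter /Dup !count_filter /innerP /= (permP PI2) /= Ex xdup /= add1n.
  by congr _.+1; apply: eq_in_count => z zi /=; rewrite deq2.
exact: (arithB cf1 cf2 le sL sD sD').
Qed.

Theorem lemma12 (B : eqType) (G G' : ptree nat) (S : ptree B) (phi : nat -> B)
    (rho : nat -> B) (delta : nat -> option nat) :
  wf_tree G -> wf_tree S ->
  (forall x, x \in leavesP G -> phi x \in leavesP S) ->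
  optimal G G' S phi rho delta ->
  forall x, x \in Dup G' rho -> x \in nodesP G.
Proof.
move=> wfG wfS _ [rec opt] x xD.
case E: (x \in nodesP G) => //; exfalso.
have rec0 := rec; case: rec0 => [[wf [keep Hres]] _].
have xin : x \in innerP G' by move: xD; rewrite /Dup mem_filter => /andP[].
have xdup : is_dup G' rho x by move: xD; rewrite /Dup mem_filter => /andP[].
have [C [l [r Ht]]] := plug_inner xin.
have uN := wf_uniq wf.
have uu : uniq (cnodes C ++ nodes (Node x l r)) by rewrite -(perm_uniq (nodes_plug C _)) -Ht.
have xC : x \notin cnodes C by apply: (uniq_catr uu); rewrite /= mem_head.
have Kx : kids (pbody G') x = Some (label l, label r) by rewrite Ht kids_plug_in //= eqxx.
move: xdup; rewrite /is_dup /kidsP Kx => /andP[/eqP Ll /eqP Lr].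
have uNode : uniq (nodes (Node x l r)) by move: uu; rewrite cat_uniq => /and3P[].
move: (uNode); rewrite /= mem_cat negb_or cat_uniq => /andP[/andP[xl xr] /and3P[_ dis _]].
have Kl : forall z, z \in nodes l -> kids (Node x l r) z = kids l z.
  move=> z zl /=.
  have zx : (x == z) = false by apply/negP => /eqP ez; move: xl; rewrite ez zl.
  have zr : z \notin nodes r by apply/negP => zr; move/negP: dis; apply; apply/hasP; exists z.
  by rewrite zx (kids_notin zr); case: (kids l z).
have Kr : forall z, z \in nodes r -> kids (Node x l r) z = kids r z.
  move=> z zr /=.
  have zx : (x == z) = false by apply/negP => /eqP ez; move: xr; rewrite ez zr.
  have zl : z \notin nodes l by apply/negP => zl; move/negP: dis; apply; apply/hasP; exists z.
  by rewrite zx (kids_notin zl).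
have HrG : restr keep (pbody G') = Some (pbody G).
  by move: Hres; rewrite /restrP; case: (restr keep (pbody G')) => // g [<-].
have PnA : perm_eq (nodes (Node x l r)) (x :: nodes l ++ nodes r) by [].
have PnB : perm_eq (nodes (Node x l r)) (x :: nodes r ++ nodes l) by rewrite /= perm_cons perm_catC.
have PiA : perm_eq (inner (Node x l r)) (x :: inner l ++ inner r) by [].
have PiB : perm_eq (inner (Node x l r)) (x :: inner r ++ inner l) by rewrite /= perm_cons perm_catC.
have PlA : perm_eq (leaves (Node x l r)) (leaves l ++ leaves r) by [].
have PlB : perm_eq (leaves (Node x l r)) (leaves r ++ leaves l) by rewrite /= perm_catC.
case Rl: (restr keep l) => [l'|]; case Rr: (restr keep r) => [r'|].
- have Rn : restr keep (Node x l r) = Some (Node x l' r') by rewrite /= Rl Rr.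
  have [g [Hg Hsub]] := restr_plug_sub C Rn.
  move: Hg; rewrite -Ht HrG => -[Eg].
  have : x \in nodes g by apply: Hsub; rewrite /= mem_head.
  by rewrite -Eg => xg; move: E; rewrite /nodesP in_cons xg orbT.
- apply: (core rec opt Hres Ht xD PnA PiA PlA _ Rr) => //; by rewrite /= ?Rl ?Rr.
- apply: (core rec opt Hres Ht xD PnB PiB PlB _ Rl) => //; by rewrite /= ?Rl ?Rr.
- apply: (core rec opt Hres Ht xD PnA PiA PlA _ Rr) => //; by rewrite /= ?Rl ?Rr.
Qed.
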